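(* For any graph $G$ and any two independent sets $I_s,I_t$ of $G$, a shortest reconfiguration sequence from $I_s$ to $I_t$ has length at most $\mathrm{cc}(I_s\triangle I_t)$.
   Context: All graphs are finite, simple and undirected. For $V'\subseteq V(G)$, $\mathrm{cc}(V')$ denotes the number of connected components of the induced subgraph $G[V']$. A reconfiguration sequence from $I_s$ to $I_t$ of length $\ell$ is a sequence $\langle I_s=I_0,\dots,I_\ell=I_t\rangle$ of independent sets of $G$ such that $G[I_{i-1}\triangle I_i]$ is connected for every $i\in\{1,\dots,\ell\}$. *)

(* Defs.v *)
From mathcomp Require Import all_boot.
Set Implicit Arguments. Unset Strict Implicit. Unset Printing Implicit Defensive.

Definition simple_graph (T : finType) (e : rel T) : Prop :=
  symmetric e /\ irreflexive e.

Definition induced_rel (T : finType) (e : rel T) (A : {set T}) : rel T :=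
  [rel x y | [&& x \in A, y \in A & e x y]].

Definition independent (T : finType) (e : rel T) (I : {set T}) : bool :=
  [forall x in I, forall y in I, ~~ e x y].

Definition connected_induced (T : finType) (e : rel T) (A : {set T}) : bool :=
  (A != set0) && [forall x in A, forall y in A, connect (induced_rel e A) x y].

Definition cc (T : finType) (e : rel T) (A : {set T}) : nat :=
  #|[set [set y in A | connect (induced_rel e A) x y] | x in A]|.

Definition symdiff (T : finType) (A B : {set T}) : {set T} :=
  (A :\: B) :|: (B :\: A).

Definition reconf_seq (T : finType) (e : rel T) (Is It : {set T})
    (l : nat) (f : nat -> {set T}) : Prop :=
  f 0 = Is /\ f l = It /\
  (forall i, i <= l -> independent e (f i)) /\
  (forall i, 1 <= i <= l -> connected_induced e (symdiff (f i.-1) (f i))).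

(* Main.v *)
Require Import Defs.
From mathcomp Require Import all_boot.

Lemma indepP (T : finType) (e : rel T) (I : {set T}) :
  reflect (forall x y, x \in I -> y \in I -> ~~ e x y) (independent e I).
Proof.
apply: (iffP forallP) => [H x y xI yI | H x].
  by move/implyP: (H x) => /(_ xI) /forallP /(_ y) /implyP /(_ yI).
apply/implyP=> xI; apply/forallP=> y; apply/implyP=> yI; exact: H.
Qed.

Lemma indep_symdiff (T : finType) (e : rel T) (Is It U : {set T}) :
  symmetric e -> independent e Is -> independent e It ->
  U \subset symdiff Is It ->
  (forall y x, y \in U -> x \in symdiff Is It -> e y x -> x \in U) ->
  independent e (symdiff Is U).
Proof.
move=> esym /indepP hs /indepP ht /subsetP sU cl; apply/indepP=> x y.
have key : forall a b, a \in symdiff Is U -> b \in symdiff Is U ->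
    a \notin U -> b \in U -> ~~ e a b.
  move=> a b; rewrite !inE => ha hb aU bU.
  have bIt : b \in It /\ b \notin Is.
    by move: hb (sU _ bU); rewrite !inE bU /=; case: (b \in Is); case: (b \in It).
  have aIs : a \in Is by move: ha; rewrite (negbTE aU) /=; case: (a \in Is); rewrite ?andbT ?orbF.
  case aIt: (a \in It); first by apply: ht => //; case: bIt.
  apply/negP=> eab; move: aU; rewrite (cl b a bU) //.
    by rewrite !inE aIs aIt.
  by rewrite esym.
move=> hx hy.
case xU: (x \in U); case yU: (y \in U).
- apply: ht.
    by move: hx (sU _ xU); rewrite !inE xU /=; case: (x \in Is); case: (x \in It).
  by move: hy (sU _ yU); rewrite !inE yU /=; case: (y \in Is); case: (y \in It).
- rewrite esym; apply: key => //; by rewrite yU.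
- by apply: key => //; rewrite xU.
- apply: hs.
    by move: hx; rewrite !inE xU; case: (x \in Is).
  by move: hy; rewrite !inE yU; case: (y \in Is).
Qed.

Lemma block_conn (T : finType) (e : rel T) (D : {set T}) (x : T) :
  symmetric e -> x \in D ->
  connected_induced e [set y in D | connect (induced_rel e D) x y].
Proof.
move=> esym xD; set B := [set y in D | _].
have xB : x \in B by rewrite inE xD connect0.
have symB : connect_sym (induced_rel e B).
  apply: sym_connect_sym => a b; rewrite /induced_rel /= esym.
  by case: (a \in B); case: (b \in B).
have gen : forall p a, a \in B -> path (induced_rel e D) a p ->
    connect (induced_rel e B) a (last a p).
  elim=> [|b p IH] a aB //=.
  case/andP=> hab hp.
  have bB : b \in B.
    move: aB hab; rewrite !inE => /andP[aD xa] /and3P[_ bD eab].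
    rewrite bD /=; apply: connect_trans xa _; apply: connect1.
    by rewrite /induced_rel /= aD bD eab.
  apply: connect_trans (IH b bB hp); apply: connect1.
  by move: hab => /and3P[_ _ eab]; rewrite /induced_rel /= aB bB.
have fromx : forall v, v \in B -> connect (induced_rel e B) x v.
  move=> v; rewrite inE => /andP[_ /connectP[p hp ->]]; exact: gen.
apply/andP; split; first by apply/set0Pn; exists x.
apply/forallP=> u; apply/implyP=> uB; apply/forallP=> v; apply/implyP=> vB.
by apply: connect_trans (fromx v vB); rewrite symB; apply: fromx.
Qed.

Theorem mainTheorem19 (T : finType) (e : rel T) (Is It : {set T}) :
  simple_graph e -> independent e Is -> independent e It ->
  exists (l : nat) (f : nat -> {set T}),
    reconf_seq e Is It l f /\ l <= cc e (symdiff Is It).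
Proof.
move=> [esym eirr] hs ht.
set D := symdiff Is It.
set K := connect (induced_rel e D).
have symK : connect_sym (induced_rel e D).
  apply: sym_connect_sym => a b; rewrite /induced_rel /= esym.
  by case: (a \in D); case: (b \in D).
have eqK : {in D & &, equivalence_rel K}.
  move=> a b c _ _ _; split; first exact: connect0.
  move=> hab; apply/idP/idP => h; first by apply: connect_trans h; rewrite /K symK.
  exact: connect_trans hab h.
set P := equivalence_partition K D.
have partP : partition P D := equivalence_partitionP eqK.
set s := enum P.
have us : uniq s := enum_uniq _.
have blk : forall B, B \in P -> exists2 z, z \in D & B = [set y in D | K z y].
  by move=> B /imsetP[z zD ->]; exists z.
have nthP : forall j, j < size s -> nth set0 s j \in P.
  by move=> j js; rewrite -mem_enum; apply: mem_nth.
have clB : forall B y x, B \in P -> y \in B -> x \in D -> e y x -> x \in B.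
  move=> B y x /blk[z zD ->] /setIdP[yD zy] xD eyx.
  apply/setIdP; split => //; apply: connect_trans zy _; apply: connect1.
  by rewrite /induced_rel /= yD xD eyx.
have subB : forall B, B \in P -> B \subset D.
  by move=> B /blk[z zD ->]; apply/subsetP=> y /setIdP[].
have disj : forall j i, j < i -> i < size s ->
    [disjoint nth set0 s j & nth set0 s i].
  move=> j i ji is_.
  have js : j < size s by apply: ltn_trans ji is_.
  move/trivIsetP: (partition_trivIset partP) => tI.
  apply: tI; try exact: nthP.
  by rewrite nth_uniq // neq_ltn ji.
pose U (i : nat) := \bigcup_(j < i) nth set0 s j.
have memU : forall i x, reflect (exists2 j, j < i & x \in nth set0 s j) (x \in U i).
  move=> i x; apply: (iffP bigcupP) => [[j _ h] | [j ji h]].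
    by exists j.
  by exists (Ordinal ji).
have subU : forall i, i <= size s -> U i \subset D.
  move=> i iS; apply/subsetP=> x /memU[j ji h].
  exact: (subsetP (subB _ (nthP _ (leq_trans ji iS)))).
have clU : forall i, i <= size s -> forall y x, y \in U i -> x \in D -> e y x -> x \in U i.
  move=> i iS y x /memU[j ji h] xD eyx; apply/memU; exists j => //.
  exact: clB (nthP _ (leq_trans ji iS)) h xD eyx.
have UD : U (size s) = D.
  apply/setP=> x; apply/idP/idP; first by apply: (subsetP (subU _ (leqnn _))).
  move=> xD; apply/memU.
  have BP : [set y in D | K x y] \in P by apply: imset_f.
  exists (index [set y in D | K x y] s); first by rewrite index_mem mem_enum.
  by rewrite nth_index ?mem_enum //; apply/setIdP; split => //; apply: connect0.
have U0 : U 0 = set0 by rewrite /U big_ord0.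
have US : forall n, U n.+1 = U n :|: nth set0 s n.
  by move=> n; rewrite /U big_ord_recr.
exists (size s), (fun i => symdiff Is (U i)); split; last first.
  by rewrite /cc cardE.
split; first by apply/setP=> x; rewrite U0 !inE; case: (x \in Is).
split.
  rewrite UD; apply/setP=> x; rewrite !inE.
  by case: (x \in Is); case: (x \in It).
split.
  move=> i iS; apply: (@indep_symdiff T e Is It) => //; first exact: (subU i iS).
  exact: clU.
case=> // n /= nS.
have -> : symdiff (symdiff Is (U n)) (symdiff Is (U n.+1)) = nth set0 s n.
  apply/setP=> x; rewrite US.
  have H : x \in nth set0 s n -> x \in U n = false.
    move=> xn; apply/negP => /memU[j jn xj].
    by rewrite (disjointFr (disj j n jn nS) xj) in xn.
  rewrite !inE.
  case xn: (x \in nth set0 s n); first by rewrite (H xn); case: (x \in Is).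
  by case: (x \in Is); case: (x \in U n).
have /blk[z zD ->] := nthP _ nS.
exact: block_conn.
Qed.
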